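(* Let $q>1$ and let $(M,\le)$ be a finite ordered monoid such that $M$ is a $T_q$ monoid. Then $N^1(M)=\Omega(n)$.
   Context: $M$ is a $T_q$ monoid if there exist idempotents $e,f\in M$ (i.e. $ee=e$, $ff=f$) such that $(ef)^qe=e$ and $(ef)^re\ne e$ for every positive integer $r$ not divisible by $q$. A finite ordered monoid is a finite monoid with a partial order such that $x\le y\Rightarrow zx\le zy$ and $xz\le yz$. Non-deterministic communication complexity: for $f:X\times Y\to\{0,1\}$, $N^1(f)$ is the minimum cost of a non-deterministic protocol for $f$; equivalently, up to an additive constant 2, $N^1(f)=\log_2 C^1(f)$, where $C^1(f)$ is the minimum number of rectangles $S\times T$ on which $f\equiv1$ whose union is $f^{-1}(1)$. An order ideal is a subset $I\subseteq M$ with $y\in I, x\le y\Rightarrow x\in I$. For an order ideal $I$, $N^1(M,I)(n)$ is $N^1$ of the function where Alice receives $m_1,m_3,\dots,m_{2n-1}\in M$, Bob receives $m_2,\dots,m_{2n}\in M$, with value $1$ iff $m_1\cdots m_{2n}\in I$; $N^1(M)(n)=\max_I N^1(M,I)(n)$. Asymptotics are as $n\to\infty$. *)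

(* Defs.v *)
From mathcomp Require Import all_boot.
Set Implicit Arguments. Unset Strict Implicit. Unset Printing Implicit Defensive.

Section Comm.
Variables (X Y : finType) (f : X -> Y -> bool).

Definition is_1rect (R : {set X} * {set Y}) : bool :=
  [forall x in R.1, forall y in R.2, f x y].

Definition covers k (R : {ffun 'I_k -> {set X} * {set Y}}) : bool :=
  [forall i, is_1rect (R i)] &&
  [forall x, forall y, f x y ==> [exists i, (x \in (R i).1) && (y \in (R i).2)]].

Definition has_cover (k : nat) : bool :=
  [exists R : {ffun 'I_k -> {set X} * {set Y}}, covers R].

(* C^1(f): minimum number of 1-rectangles covering f^{-1}(1).  Since the
   singleton rectangles give a cover of size #|f^{-1}(1)| <= #|X| * #|Y|,
   the least k with has_cover k lies in 0 .. #|X| * #|Y|, so [find] over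
   iota 0 (#|X|*#|Y|).+1 returns exactly that minimum. *)
Definition C1 : nat := find has_cover (iota 0 (#|X| * #|Y|).+1).

End Comm.

(* The word problem: Alice holds m_1, m_3, ..., m_{2n-1} (as a i),
   Bob holds m_2, ..., m_{2n} (as b i); the product is
   m_1 m_2 ... m_{2n} = (a 0 * b 0) * (a 1 * b 1) * ... *)
Definition word_prod (M : Type) (mul : M -> M -> M) (one : M) (n : nat)
  (a b : {ffun 'I_n -> M}) : M :=
  \big[mul/one]_(i < n) mul (a i) (b i).

Definition order_ideal (M : finType) (le : M -> M -> bool) (I : {set M}) : Prop :=
  forall x y : M, y \in I -> le x y -> x \in I.

Definition efpow (M : Type) (mul : M -> M -> M) (e f : M) (r : nat) : M :=
  iter r (fun x => mul (mul e f) x) e.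

Definition Tq_monoid (M : Type) (mul : M -> M -> M) (q : nat) : Prop :=
  exists e f : M, mul e e = e /\ mul f f = f /\ efpow mul e f q = e /\
    forall r, 0 < r -> ~~ (q %| r) -> efpow mul e f r <> e.

(* Main.v *)
Require Import Defs.
From mathcomp Require Import all_boot all_algebra.
From mathcomp Require Import zify.
Set Implicit Arguments. Unset Strict Implicit. Unset Printing Implicit Defensive.
Import GRing.Theory.

Lemma cover_lb (X Y : finType) (f : X -> Y -> bool) (X' Y' : finType)
  (al : X' -> X) (be : Y' -> Y) (h : X' -> Y' -> bool) (s : nat) :
  (forall x y, f (al x) (be y) = h x y) ->
  (forall P : {set X'}, forall Q : {set Y'},
     (forall x y, x \in P -> y \in Q -> h x y) -> #|P| * #|Q| <= s) ->
  forall k, has_cover f k -> \sum_x \sum_y (h x y : nat) <= k * s.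
Proof.
move=> Hf Hr k /existsP [R /andP [/forallP R1 /forallP Rc]].
pose P i := [set x | al x \in (R i).1]. pose Q i := [set y | be y \in (R i).2].
have HPQ i : #|P i| * #|Q i| <= s.
  apply: Hr => x y; rewrite !inE => Hx Hy; rewrite -Hf.
  by have /forallP/(_ (al x))/implyP/(_ Hx)/forallP/(_ (be y))/implyP/(_ Hy) := R1 i.
apply: (@leq_trans (\sum_x \sum_y \sum_(i < k) ((x \in P i) && (y \in Q i) : nat))).
  apply: leq_sum => x _; apply: leq_sum => y _.
  case Hh: (h x y) => //.
  have /forallP/(_ (be y))/implyP := Rc (al x); rewrite Hf Hh => /(_ isT).
  case/existsP => i /andP [h1 h2].
  rewrite (bigD1 i) //= !inE h1 h2 /=; exact: leq_addr.
have -> : \sum_x \sum_y \sum_(i < k) ((x \in P i) && (y \in Q i) : nat)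
   = \sum_(i < k) (#|P i| * #|Q i|).
  rewrite (eq_bigr (fun x => \sum_(i < k) \sum_y ((x \in P i) && (y \in Q i) : nat))); last first.
    by move=> x _; rewrite exchange_big.
  rewrite exchange_big /=; apply: eq_bigr => i _.
  rewrite -!sum1_card big_distrl /= [RHS]big_mkcond /=; apply: eq_bigr => x _.
  case: (x \in P i); rewrite ?mul1n /=; last by rewrite big1.
  by rewrite [RHS]big_mkcond; apply: eq_bigr => y _; case: (y \in Q i).
apply: (@leq_trans (\sum_(i < k) s)); first by apply: leq_sum => i _.
by rewrite sum_nat_const card_ord.
Qed.

Lemma C1_ge (X Y : finType) (f : X -> Y -> bool) N :
  (forall k, has_cover f k -> N <= k) -> N <= (#|X| * #|Y|).+1 -> N <= C1 f.
Proof.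
move=> H HN; rewrite /C1.
set s := iota _ _.
case: (ltnP (find (has_cover f) s) (size s)) => Hs.
  apply: H; have Hs2 := Hs; rewrite -has_find in Hs2; have := nth_find 0 Hs2.
  by rewrite nth_iota ?add0n // -(size_iota 0 (#|X| * #|Y|).+1).
by apply: leq_trans Hs; rewrite size_iota.
Qed.

Section Mon.
Variables (M : Type) (mul : M -> M -> M) (one : M).
Hypothesis mulA : forall x y z, mul x (mul y z) = mul (mul x y) z.
Hypothesis mul1m : forall x, mul one x = x.
Hypothesis mulm1 : forall x, mul x one = x.
Variables (e f : M).
Hypothesis he : mul e e = e.
Hypothesis hf : mul f f = f.
Local Notation g := (efpow mul e f).

Lemma heR x : mul (mul x e) e = mul x e. Proof. by rewrite -mulA he. Qed.
Lemma hfR x : mul (mul x f) f = mul x f. Proof. by rewrite -mulA hf. Qed.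

Ltac norm := repeat progress rewrite ?mulA ?he ?hf ?heR ?hfR ?mulm1 ?mul1m.

Lemma gS r : g r.+1 = mul (mul e f) (g r). Proof. by []. Qed.

Lemma eg r : mul e (g r) = g r.
Proof. case: r => [|r]; rewrite /= ?he //; by norm. Qed.

Lemma ge r : mul (g r) e = g r.
Proof. elim: r => [|r IH] /=; first by rewrite he. by rewrite -mulA IH. Qed.

Lemma g_add r s : g (r + s) = mul (g r) (g s).
Proof.
elim: r => [|r IH]; first by rewrite add0n /= eg.
by rewrite addSn !gS IH mulA.
Qed.

Lemma g_mul r t : g r = e -> g (r * t) = e.
Proof.
move=> H; elim: t => [|t IH]; first by rewrite muln0.
by rewrite mulnS g_add H IH he.
Qed.

Definition prodl (l : seq (M * M)) : M :=
  foldr (fun pr acc => mul (mul pr.1 pr.2) acc) one l.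

Definition blocksA (us : seq bool) : seq M :=
  flatten [seq [:: e; if u then e else one; e] | u <- us].
Definition blocksB (vs : seq bool) : seq M :=
  flatten [seq [:: f; if v then f else one; one] | v <- vs].

Lemma blk (u v : bool) R :
  mul e (mul (mul e f) (mul (mul (if u then e else one) (if v then f else one))
     (mul (mul e one) R))) = mul (g (1 + (u && v))) (mul e R).
Proof. by case: u; case: v => /=; norm. Qed.

Lemma blocks_prod (T : Type) (J : seq T) (U V : T -> bool) :
  mul e (prodl (zip (blocksA (map U J)) (blocksB (map V J))))
  = g (size J + \sum_(j <- J) (U j && V j : nat)).
Proof.
elim: J => [|j J IH]; first by rewrite /= mulm1 big_nil.
rewrite big_cons [LHS]/= blk IH -g_add; f_equal; rewrite /=; lia.
Qed.

Lemma blocks_prod' (T : Type) (J : seq T) (U V : T -> bool) :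
  0 < size J ->
  prodl (zip (blocksA (map U J)) (blocksB (map V J)))
  = g (size J + \sum_(j <- J) (U j && V j : nat)).
Proof.
case: J => [//|j J] _; rewrite -blocks_prod /=; by norm.
Qed.

Lemma size_blocksA us : size (blocksA us) = 3 * size us.
Proof. elim: us => [|u us IH] //=; rewrite IH; lia. Qed.
Lemma size_blocksB us : size (blocksB us) = 3 * size us.
Proof. elim: us => [|u us IH] //=; rewrite IH; lia. Qed.

Lemma big_iota_prodl (La Lb : seq M) n :
  size La = size Lb -> size La <= n ->
  \big[mul/one]_(j <- iota 0 n) mul (nth one La j) (nth one Lb j)
  = prodl (zip La Lb).
Proof.
elim: La Lb n => [|a La IH] [|b Lb] [|n] //=.
- by move=> _ _; rewrite big_nil.
- move=> _ _; rewrite big_cons nth_nil mulm1 mul1m.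
  elim: (iota 1 n) => [|j r IHr]; first by rewrite big_nil.
  by rewrite big_cons !nth_nil mulm1 mul1m.
- move=> [hs] hn; rewrite big_cons [in X in _ = mul _ X]/= -[1]/(1+0) iotaDl big_map /=.
  congr mul; rewrite -(IH Lb n) //.
Qed.

End Mon.

Lemma sum_iota_lt p a : \sum_(k <- iota 0 p) (k < a : nat) = minn p a.
Proof.
elim: p => [|p IH]; first by rewrite big_nil; lia.
rewrite -addn1 iotaD big_cat IH /= big_seq1; case: (ltnP p a) => h /=; lia.
Qed.

Lemma sum_pairs p (a b : nat) : a <= p -> b <= p ->
  \sum_(kl <- [seq (k, l) | k <- iota 0 p, l <- iota 0 p]) ((kl.1 < a) && (kl.2 < b) : nat)
  = a * b.
Proof.
move=> ha hb; rewrite big_allpairs /=.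
have -> : a * b = (\sum_(k <- iota 0 p) (k < a : nat)) * (\sum_(l <- iota 0 p) (l < b : nat)).
  rewrite !sum_iota_lt; lia.
rewrite big_distrl /=; apply: eq_bigr => k _; rewrite big_distrr /=.
by apply: eq_bigr => l _; case: (k < a); case: (l < b).
Qed.

Section Enc.
Variables (p c m : nat).
Hypothesis pr : prime p.
Local Notation F := 'F_p.

Lemma Fp_lt (z : F) : (z : nat) < p.
Proof. have := ltn_ord z; move: (nat_of_ord z) => v; by rewrite Fp_cast. Qed.

Definition Av (x : 'rV[F]_m) (i : nat) : nat :=
  if insub i is Some j then (x ord0 j : nat) else 0.

Lemma Av_le x i : Av x i <= p.
Proof. rewrite /Av; case: insub => [j|//]; have := Fp_lt (x ord0 j); lia. Qed.

Definition Jl : seq (nat * (nat * nat)) :=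
  flatten (nseq c [seq (i, kl) | i <- iota 0 m, kl <- [seq (k, l) | k <- iota 0 p, l <- iota 0 p]]).

Lemma size_Jl : size Jl = c * (m * (p * p)).
Proof.
rewrite /Jl size_flatten /shape map_nseq sumn_nseq !size_allpairs !size_iota; lia.
Qed.

Definition Uf (x : 'rV[F]_m) (j : nat * (nat * nat)) : bool := j.2.1 < Av x j.1.
Definition Vf (y : 'rV[F]_m) (j : nat * (nat * nat)) : bool := j.2.2 < Av y j.1.

Lemma sum_Jl x y :
  \sum_(j <- Jl) (Uf x j && Vf y j : nat) = c * \sum_(i < m) (x ord0 i : nat) * (y ord0 i : nat).
Proof.
rewrite /Jl big_flatten big_nseq iter_addn_0 mulnC; congr (_ * _).
rewrite big_allpairs /=.
have -> : iota 0 m = index_iota 0 m by rewrite /index_iota subn0.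
rewrite big_mkord; apply: eq_bigr => i _.
by rewrite (sum_pairs (Av_le x i) (Av_le y i)) /Av valK.
Qed.

Local Open Scope ring_scope.
Lemma orth_iff (x y : 'rV[F]_m) :
  (x *m y^T == 0) = (p %| \sum_(i < m) (x ord0 i : nat) * (y ord0 i : nat))%N.
Proof.
have hv (z : F) : z = (z : nat)%:R.
  by apply: val_inj; rewrite /= val_Fp_nat // modn_small // Fp_lt.
have -> : (x *m y^T == 0) = ((x *m y^T) 0 0 == 0).
  apply/eqP/eqP => [->|H]; first by rewrite mxE.
  by rewrite [LHS]mx11_scalar H raddf0.
rewrite mxE.
have -> : \sum_j x 0 j * y^T j 0 = (\sum_(i < m) (x ord0 i : nat) * (y ord0 i : nat))%N%:R :> F.
  rewrite natr_sum; apply: eq_bigr => i _; rewrite natrM mxE -!hv //.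
apply/eqP/idP => [H|H].
  have := congr1 val H; rewrite /= val_Fp_nat // => /eqP; by rewrite -/(dvdn _ _).
by apply: val_inj; rewrite /= val_Fp_nat //; apply/eqP.
Qed.

End Enc.

Section LA.
Variable F : finFieldType.
Local Open Scope ring_scope.

Lemma card_rowspace r m (K : 'M[F]_(r, m)) :
  #|[set v : 'rV[F]_m | (v <= K)%MS]| = (#|F| ^ \rank K)%N.
Proof.
have -> : [set v : 'rV[F]_m | (v <= K)%MS] =
   (fun w : 'rV[F]_(\rank K) => w *m row_base K) @: setT.
  apply/setP => v; rewrite inE; apply/idP/imsetP.
    rewrite -(eq_row_base K) => /submxP [w ->]; by exists w.
  by move=> [w _ ->]; rewrite -(eq_row_base K); apply/submxP; exists w.
rewrite card_imset; last exact: row_free_inj (row_base_free K).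
by rewrite cardsT card_mx mul1n.
Qed.

Lemma orth_rect m (P Q : {set 'rV[F]_m}) :
  (forall x y, x \in P -> y \in Q -> x *m y^T = 0) ->
  (#|P| * #|Q| <= #|F| ^ m)%N.
Proof.
move=> H.
pose U := (\sum_(x in P) <<x>>)%MS. pose V := (\sum_(y in Q) <<y>>)%MS.
have PU : (#|P| <= #|F| ^ \rank U)%N.
  rewrite -card_rowspace; apply: subset_leq_card; apply/subsetP => x xP.
  by rewrite inE; apply: (sumsmx_sup x) => //; by rewrite genmxE.
have QV : (#|Q| <= #|F| ^ \rank V)%N.
  rewrite -card_rowspace; apply: subset_leq_card; apply/subsetP => x xP.
  by rewrite inE; apply: (sumsmx_sup x) => //; by rewrite genmxE.
have VK : (V <= kermx U^T)%MS.
  apply/sumsmx_subP => y yQ; rewrite genmxE; apply/sub_kermxP.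
  have : (U <= kermx y^T)%MS.
    by apply/sumsmx_subP => x xP; rewrite genmxE; apply/sub_kermxP; exact: H.
  move/sub_kermxP => HU.
  by rewrite -[y]trmxK -trmx_mul HU trmx0.
have rk : (\rank U + \rank V <= m)%N.
  have := mxrankS VK; rewrite mxrank_ker mxrank_tr.
  have := rank_leq_col U. lia.
apply: leq_trans (leq_mul PU QV) _.
rewrite -expnD leq_pexp2l //; last by apply/card_gt0P; exists 0.
Qed.


Lemma sum_b2n (T : finType) (P : pred T) : \sum_(y : T) (P y : nat) = #|[set y | P y]|.
Proof. by rewrite -sum1dep_card [RHS]big_mkcond; apply: eq_bigr => y _; case: (P y). Qed.

Lemma orth_count m :
  (#|F| ^ m * #|F| ^ m.-1 <=
   \sum_(x : 'rV[F]_m) \sum_(y : 'rV[F]_m) ((x *m y^T == 0%R) : nat))%N.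
Proof.
have F0 : (0 < #|F|)%N by apply/card_gt0P; exists 0.
rewrite -{1}[m]mul1n -card_mx -sum_nat_const; apply: leq_sum => x _.
rewrite sum_b2n.
have -> : [set y : 'rV[F]_m | x *m y^T == 0] = [set y | (y <= kermx x^T)%MS].
  apply/setP => y; rewrite !inE; apply/eqP/sub_kermxP.
    by move=> H; rewrite -[y]trmxK -trmx_mul H trmx0.
  by move=> H; rewrite -[x]trmxK -trmx_mul H trmx0.
rewrite card_rowspace mxrank_ker mxrank_tr leq_pexp2l //.
have := rank_leq_row x; lia.
Qed.

End LA.

Section Ord.
Variables (M : finType) (mul : M -> M -> M) (one : M) (le : M -> M -> bool).
Hypothesis mulA : forall x y z, mul x (mul y z) = mul (mul x y) z.
Hypothesis mul1m : forall x, mul one x = x.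
Hypothesis mulm1 : forall x, mul x one = x.
Hypothesis le_refl : forall x, le x x.
Hypothesis le_anti : forall x y, le x y -> le y x -> x = y.
Hypothesis le_trans : forall x y z, le x y -> le y z -> le x z.
Hypothesis le_mull : forall x y z, le x y -> le (mul z x) (mul z y).
Hypothesis le_mulr : forall x y z, le x y -> le (mul x z) (mul y z).
Variables (q : nat) (e f : M).
Hypothesis he : mul e e = e.
Hypothesis hf : mul f f = f.
Hypothesis q0 : 0 < q.
Hypothesis gq : efpow mul e f q = e.
Hypothesis gn : forall r, 0 < r -> ~~ (q %| r) -> efpow mul e f r <> e.
Local Notation g := (efpow mul e f).

Lemma g_le r : le (g r) e -> g r = e.
Proof.
move=> H.
have chain k : le (g (k.+1 * r)) (g r).
  elim: k => [|k IH]; first by rewrite mul1n.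
  apply: le_trans IH.
  rewrite mulSn (g_add mulA f he).
  rewrite -{2}(eg mulA f he (k.+1 * r)).
  exact: le_mulr.
have := chain q.-1; rewrite prednK // (g_mul mulA he _ gq) => H2.
exact: le_anti.
Qed.

Lemma g_le_iff r : le (g r) e = (q %| r).
Proof.
apply/idP/idP => [H|/dvdnP [t ->]].
  have E := g_le H.
  apply/negPn/negP => hd.
  have r0 : 0 < r by case: r hd {H E} => [|r] //; rewrite dvdn0.
  exact: (gn r0 hd E).
by rewrite mulnC (g_mul mulA he _ gq) le_refl.
Qed.

Lemma e_neq_one (hq : 1 < q) : e != one.
Proof.
apply/eqP => E.
have g1 r : g r.+1 = f.
  elim: r => [|r IH]; first by rewrite /= E mul1m mulm1.
  by rewrite gS IH E mul1m hf.
have := gq; rewrite -(prednK q0) g1 => Hf.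
apply: (gn (r := 1)) => //; first by rewrite dvdn1; lia.
by rewrite g1.
Qed.

End Ord.

Theorem mainTheorem13
  (M : finType) (mul : M -> M -> M) (one : M) (le : M -> M -> bool)
  (mulA : forall x y z, mul x (mul y z) = mul (mul x y) z)
  (mul1m : forall x, mul one x = x) (mulm1 : forall x, mul x one = x)
  (le_refl : forall x, le x x)
  (le_anti : forall x y, le x y -> le y x -> x = y)
  (le_trans : forall x y z, le x y -> le y z -> le x z)
  (le_mull : forall x y z, le x y -> le (mul z x) (mul z y))
  (le_mulr : forall x y z, le x y -> le (mul x z) (mul y z))
  (q : nat) (hq : 1 < q) (hT : Tq_monoid mul q) :
  exists k : nat, 0 < k /\ exists n0 : nat, forall n : nat, n0 <= n ->
    exists I : {set M}, order_ideal le I /\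
      n %/ k <= trunc_log 2
        (C1 (fun a b : {ffun 'I_n -> M} => word_prod mul one a b \in I)).
Proof.
case: hT => e [f [he [hf [gq gn]]]].
have q0 : 0 < q by lia.
pose p := pdiv q.
have pr : prime p := pdiv_prime hq.
have p1 : 1 < p := prime_gt1 pr.
have p0 : 0 < p := prime_gt0 pr.
pose c := q %/ p.
have qcp : q = c * p by rewrite /c divnK // pdiv_dvd.
have c0 : 0 < c by move: q0; rewrite qcp muln_gt0 => /andP [].
exists (3 * q * p * 2); split; first by rewrite !muln_gt0 q0 p0.
exists 0 => n _.
pose I := [set z | le z e].
exists I; split.
  by move=> x y; rewrite !inE => hy hxy; exact: le_trans hxy hy.
pose m := n %/ (3 * q * p).
rewrite divnMA -/m.
have [m0|mpos] := posnP m; first by rewrite m0.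
have mn : m <= n by exact: leq_div.
suff H : 2 ^ m.-1 <= C1 (fun a b : {ffun 'I_n -> M} => word_prod mul one a b \in I).
  have := trunc_log_max (isT : 1 < 2) H; lia.
pose J := Jl p c m.
pose al (x : 'rV['F_p]_m) : {ffun 'I_n -> M} :=
  [ffun j : 'I_n => nth one (blocksA one e (map (Uf x) J)) j].
pose be (y : 'rV['F_p]_m) : {ffun 'I_n -> M} :=
  [ffun j : 'I_n => nth one (blocksB one f (map (Vf y) J)) j].
have sJ : size J = c * (m * (p * p)) by exact: size_Jl.
have Hf : forall x y : 'rV['F_p]_m,
    (word_prod mul one (al x) (be y) \in I) = (x *m y^T == 0)%R.
  move=> x y; rewrite /word_prod.
  under eq_bigr do rewrite !ffunE.
  rewrite -(big_mkord xpredT (fun j => mul (nth one (blocksA one e (map (Uf x) J)) j)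
                                          (nth one (blocksB one f (map (Vf y) J)) j))).
  rewrite /index_iota subn0.
  rewrite (big_iota_prodl mul1m mulm1); last first.
  - rewrite size_blocksA size_map sJ.
    have := leq_divM n (3 * q * p); rewrite -/m qcp; nia.
  - by rewrite size_blocksA size_blocksB !size_map.
  rewrite (blocks_prod' mulA mulm1 he hf); last by rewrite sJ !muln_gt0 c0 mpos p0.
  rewrite inE (g_le_iff mulA le_refl le_anti le_trans le_mulr he q0 gq gn).
  rewrite sum_Jl // sJ orth_iff // qcp.
  have -> : c * (m * (p * p)) = (c * p) * (m * p) by nia.
  by rewrite (dvdn_addr _ (dvdn_mulr _ (dvdnn _))) dvdn_pmul2l.
apply: C1_ge.
  move=> k hk.
  have H1 := cover_lb (f := fun a b : {ffun 'I_n -> M} => word_prod mul one a b \in I) (al := al) (be := be) (h := fun x y : 'rV['F_p]_m => (x *m y^T == 0)%R)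
    (s := (#|'F_p| ^ m)) Hf.
  have H2 : forall (P Q : {set 'rV['F_p]_m}),
      (forall x y, x \in P -> y \in Q -> (x *m y^T == 0)%R) -> #|P| * #|Q| <= #|'F_p| ^ m.
    by move=> P Q HPQ; apply: orth_rect => x y xP yQ; apply/eqP; exact: HPQ.
  have := H1 H2 k hk.
  have := @orth_count 'F_p m.
  rewrite card_Fp // => Ha Hb.
  have Hc : p ^ m.-1 <= k.
    have := leq_trans Ha Hb; rewrite mulnC leq_pmul2r //; by rewrite expn_gt0 p0.
  apply: leq_trans Hc.
  case: (m.-1) => [//|t]; rewrite leq_exp2r //.
have M2 : 1 < #|M|.
  apply/card_gt1P; exists e, one; split => //; exact: (e_neq_one mul1m mulm1 hf q0 gq gn).
rewrite !card_ffun card_ord.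
apply: (@leq_trans (2 ^ n)); first by rewrite leq_pexp2l //; lia.
apply: (@leq_trans (#|M| ^ n)); first by rewrite leq_exp2r //; lia.
apply: leq_trans (leqnSn _); apply: leq_pmulr; rewrite expn_gt0; lia.
Qed.
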